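(* Let $g\ge0$, $n\ge1$ be integers and $\mathcal{A}\in\mathcal{D}_{g,n}$ a weight datum. Let $\mathcal{A}_1,\dots,\mathcal{A}_{N-1},\mathcal{A}_N=\mathcal{A}$ be weight data lying in chambers $Ch_{\mathcal{A}_p}\ni\mathcal{A}_p$ such that $$[Ch_{\mathcal{A}_1}]\leq [Ch_{\mathcal{A}_2}]\leq \dots\leq [Ch_{\mathcal{A}_{N-1}}]\leq [Ch_{\mathcal{A}}].$$ Then this sequence induces a filtration of chain complexes $$G^{(g,\mathcal{A}_1)}\hookrightarrow G^{(g,\mathcal{A}_2)}\hookrightarrow \dots\hookrightarrow G^{(g,\mathcal{A}_{N-1})}\hookrightarrow G^{(g,\mathcal{A})},$$ where each $G^{(g,\mathcal{A}_{p-1})}\hookrightarrow G^{(g,\mathcal{A}_p)}$, $p=2,\dots,N$, is an injective map of chain complexes.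
   Context: A weight datum is $\mathcal{A}=(a_1,\dots,a_n)$ with $a_i\in\mathbb{Q}\cap(0,1]$ and $2g-2+\sum_i a_i>0$; $\mathcal{D}_{g,n}\subset\mathbb{R}^n$ is the set of weight data. For $S\subseteq\{1,\dots,n\}$ with $2\le|S|\le n$ if $g\ge1$ (resp. $2\le|S|\le n-2$ if $g=0$), the wall $w_S$ is the locus $\sum_{i\in S}a_i=1$. Chambers are the connected components of the complement in $\mathcal{D}_{g,n}$ of all walls; each is determined by the direction ($<1$ or $>1$) of $\sum_{i\in S}a_i$ for each such $S$. Chambers are partially ordered by $Ch_1\le Ch_2$ iff for every such $S$, $\sum_{i\in S}a_i>1$ on $Ch_1$ implies $\sum_{i\in S}b_i>1$ on $Ch_2$. $S_n$ acts by permuting coordinates; $[Ch]$ is the $S_n$-orbit of a chamber, and $[Ch_1]\le[Ch_2]$ iff there are $Ch_1'\in[Ch_1]$, $Ch_2'\in[Ch_2]$ with $Ch_1'\le Ch_2'$. A $(g,\mathcal{A})$-stable graph is a finite connected graph $G$ (loops and multiple edges allowed) with vertex weight $w:V(G)\to\mathbb{Z}_{\ge0}$ and $n$ legs labelled $1,\dots,n$ attached via $m:\{1,\dots,n\}\to V(G)$, with $b_1(G)+\sum_v w(v)=g$ and $2w(v)-2+|v|_E+|v|_{\mathcal{A}}>0$ for every vertex $v$, where $|v|_E$ is the number of edge half-edges at $v$ (loops counted twice) and $|v|_{\mathcal{A}}=\sum_{m(i)=v}a_i$. The graph complex $G^{(g,\mathcal{A})}$ is the chain complex of rational vector spaces generated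 by pairs $[\mathbf{G},\omega]$, with $\mathbf{G}$ a $(g,\mathcal{A})$-stable graph and $\omega$ a total order of its edges, subject to $[\mathbf{G},\omega]=\mathrm{sgn}(\sigma)[\mathbf{G}',\omega']$ whenever there is an isomorphism of $n$-marked weighted graphs $\mathbf{G}\cong\mathbf{G}'$ under which $\omega,\omega'$ differ by $\sigma\in S_{|E(\mathbf{G})|}$; it is graded by the number of edges, with differential the signed sum of the contractions of the non-loop edges. *)

(* Defs.v *)
From HB Require Import structures.
From mathcomp Require Import all_boot all_order all_algebra.
From mathcomp Require Import fingroup perm.
From mathcomp Require Import freeg.

Set Implicit Arguments.
Unset Strict Implicit.
Unset Printing Implicit Defensive.

Import Order.TTheory GRing.Theory Num.Theory.
Local Open Scope ring_scope.

Definition weight_datum (g n : nat) (A : 'I_n -> rat) : Prop :=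
  (forall i, 0 < A i <= 1) /\ 0 < 2 * g%:R - 2 + \sum_(i < n) A i.

Definition wall_index (g n : nat) (S : {set 'I_n}) : bool :=
  if g is 0 then (2 <= #|S| <= n - 2)%N else (2 <= #|S| <= n)%N.

Definition wsum (n : nat) (A : 'I_n -> rat) (S : {set 'I_n}) : rat :=
  \sum_(i in S) A i.

Definition in_chamber (g n : nat) (A : 'I_n -> rat) : Prop :=
  forall S, wall_index g S -> wsum A S <> 1.

(* Ch_A <= Ch_B  (chambers are described by the side of each wall; the
   representatives A, B are assumed to lie in chambers) *)
Definition chamber_le (g n : nat) (A B : 'I_n -> rat) : Prop :=
  forall S, wall_index g S -> 1 < wsum A S -> 1 < wsum B S.

Definition permute_wd (n : nat) (s : 'S_n) (A : 'I_n -> rat) : 'I_n -> rat :=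
  fun i => A (s i).

Definition orbit_le (g n : nat) (A B : 'I_n -> rat) : Prop :=
  exists (s t : 'S_n), chamber_le g (permute_wd s A) (permute_wd t B).

(* A graph is (nv, w, E, m):  vertices 0..nv-1, vertex weights w (a list of
   length nv), the edges E as an ORDERED list of pairs of endpoints (the order
   of the list is the total order omega of the edges; (v,v) is a loop), and the
   legs m : leg i is attached to vertex nth 0 m i. *)

Definition sgraph := (nat * seq nat * seq (nat * nat) * seq nat)%type.

Definition nv (G : sgraph) : nat := G.1.1.1.
Definition wt (G : sgraph) : seq nat := G.1.1.2.
Definition edges (G : sgraph) : seq (nat * nat) := G.1.2.
Definition legs (G : sgraph) : seq nat := G.2.

Definition adj (G : sgraph) : rel 'I_(nv G) :=
  fun u v => ((val u, val v) \in edges G) || ((val v, val u) \in edges G).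

Arguments adj : clear implicits.

Definition connected (G : sgraph) : Prop :=
  forall u v : 'I_(nv G), connect (adj G) u v.

Definition betti1 (G : sgraph) : nat := (size (edges G) + 1 - nv G)%N.

(* |v|_E : number of edge half-edges at v (loops counted twice) *)
Definition valence (G : sgraph) (v : nat) : nat :=
  \sum_(e <- edges G) ((e.1 == v) + (e.2 == v))%N.

Definition leg_weight (n : nat) (A : 'I_n -> rat) (G : sgraph) (v : nat) : rat :=
  \sum_(i < n | nth 0%N (legs G) i == v) A i.

Definition stable_graph (g n : nat) (A : 'I_n -> rat) (G : sgraph) : Prop :=
  [/\ (0 < nv G)%N, size (wt G) = nv G, size (legs G) = n,
      all (fun e => (e.1 < nv G) && (e.2 < nv G))%N (edges G) &
      all (fun v => v < nv G)%N (legs G)] /\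
      [/\ connected G,
          (betti1 G + sumn (wt G))%N = g &
          forall v : 'I_(nv G),
            0 < 2 * (nth 0%N (wt G) v)%:R - 2 + (valence G v)%:R
                + leg_weight A G v].

(* An isomorphism of n-marked weighted graphs G ~ G' (vertex bijection pi,
   edge bijection sigma, sigma sending edge number j of G to edge number
   sigma j of G'); s is the sign sgn(sigma) of the induced permutation
   between the two edge orders. *)
Definition iso_sign (G G' : sgraph) (s : rat) : Prop :=
  exists (k m : nat) (pi : 'S_k) (sigma : 'S_m),
  [/\ nv G = k, nv G' = k, size (edges G) = m, size (edges G') = m &
      size (legs G') = size (legs G)] /\
   [/\ forall v : 'I_k, nth 0%N (wt G') (pi v) = nth 0%N (wt G) v,
       forall (i : nat) (v : 'I_k), (i < size (legs G))%N ->
         nth 0%N (legs G) i = val v -> nth 0%N (legs G') i = val (pi v),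
       forall (j : 'I_m) (a b : 'I_k),
         nth (0, 0)%N (edges G) j = (val a, val b) ->
         nth (0, 0)%N (edges G') (sigma j) = (val (pi a), val (pi b)) \/
         nth (0, 0)%N (edges G') (sigma j) = (val (pi b), val (pi a)) &
       s = (-1) ^+ odd_perm sigma].

(* Contraction of the (non-loop) edge number j = (a,b): b is merged into a,
   vertices are renumbered in order, the remaining edges keep their order. *)

Definition drop_vertex (b v : nat) : nat := if (v < b)%N then v else v.-1.

Definition contract (G : sgraph) (j : nat) : sgraph :=
  let e := nth (0, 0)%N (edges G) j in
  let a := e.1 in let b := e.2 in
  let mv v := if v == b then drop_vertex b a else drop_vertex b v in
  ((nv G).-1,
   [seq (nth 0%N (wt G) v + (if v == a then nth 0%N (wt G) b else 0))%N
     | v <- iota 0 (nv G) & v != b],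
   [seq (mv f.1, mv f.2) | f <- take j (edges G) ++ drop j.+1 (edges G)],
   map mv (legs G)).

Definition chain := {freeg sgraph / rat}.

Definition gen (G : sgraph) : chain := Freeg [:: (1, G)].

Definition in_span (P : chain -> Prop) (x : chain) : Prop :=
  exists s : seq (rat * chain),
    (forall p, p \in s -> P p.2) /\ x = \sum_(p <- s) p.1 *: p.2.

Definition cx_chain (g n : nat) (A : 'I_n -> rat) (x : chain) : Prop :=
  in_span (fun y => exists G, stable_graph g A G /\ y = gen G) x.

Definition cx_rel (g n : nat) (A : 'I_n -> rat) (x : chain) : Prop :=
  in_span (fun y => exists G G' s, [/\ stable_graph g A G, stable_graph g A G',
                                       iso_sign G G' s & y = gen G - s *: gen G'])
          x.

Definition dgen (G : sgraph) : chain :=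
  \sum_(j < size (edges G) | (nth (0, 0)%N (edges G) j).1
                              != (nth (0, 0)%N (edges G) j).2)
     (-1) ^+ j *: gen (contract G j).

Definition diff (x : chain) : chain := fglift dgen x.

Definition relabel (n : nat) (s : 'S_n) (G : sgraph) : sgraph :=
  (nv G, wt G, edges G, [seq nth 0%N (legs G) (val (s i)) | i <- enum 'I_n]).

Definition relabel_map (n : nat) (s : 'S_n) (x : chain) : chain :=
  fglift (fun G => gen (relabel s G)) x.

(* The map G^{(g,A)} -> G^{(g,B)} induced by G |-> relabel s G is
   well defined (sends (g,A)-stable graphs to (g,B)-stable graphs and
   relations to relations), is a chain map (commutes with the differentials
   modulo relations) and is injective on the quotients. *)
Definition induced_injective_chain_map (g n : nat) (A B : 'I_n -> rat)
    (s : 'S_n) : Prop :=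
  [/\ forall G, stable_graph g A G -> stable_graph g B (relabel s G),
      forall x, cx_rel g A x -> cx_rel g B (relabel_map s x),
      forall x, cx_chain g A x ->
        cx_rel g B (relabel_map s (diff x) - diff (relabel_map s x)) &
      forall x, cx_chain g A x -> cx_rel g B (relabel_map s x) -> cx_rel g A x].

(* Main.v *)
Require Import Defs.
From mathcomp Require Import all_boot all_order all_algebra.
From mathcomp Require Import fingroup perm.
From mathcomp Require Import freeg.
From HB Require Import structures.
From mathcomp Require Import lra zify.
From Stdlib Require Import ClassicalEpsilon.
Set Implicit Arguments.
Unset Strict Implicit.
Unset Printing Implicit Defensive.
Import Order.TTheory GRing.Theory Num.Theory.
Local Open Scope ring_scope.



Section Lin.
Variable F : sgraph -> chain.
HB.instance Definition _ := GRing.isAdditive.Build chain chain (fglift F) (lift_is_additive F).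

Lemma fgliftD a b : fglift F (a + b) = fglift F a + fglift F b.
Proof. exact: raddfD. Qed.
Lemma fglift0 : fglift F 0 = 0.
Proof. exact: raddf0. Qed.
Lemma fglift_gen G : fglift F (gen G) = F G.
Proof. by rewrite /gen liftU scale1r. Qed.
Lemma fgliftZ c a : fglift F (c *: a) = c *: fglift F a.
Proof.
rewrite -[a in LHS]freeg_sumE -[a in RHS]freeg_sumE.
elim: (dom a) => [|z r IH]; first by rewrite !big_nil scaler0 fglift0 scaler0.
rewrite !big_cons scalerDr !fgliftD IH scalerDr; congr (_ + _).
have -> : c *: << coeff z a *g z >> = << (c * coeff z a) *g z >> :> chain.
  by apply/eqP/freeg_eqP => y; rewrite coeffZ !coeffU mulrA.
by rewrite !liftU scalerA.
Qed.
Lemma fgliftB a b : fglift F (a - b) = fglift F a - fglift F b.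
Proof. exact: raddfB. Qed.
Lemma fglift_sum (I : Type) (r : seq I) (P : pred I) (E : I -> chain) :
  fglift F (\sum_(i <- r | P i) E i) = \sum_(i <- r | P i) fglift F (E i).
Proof. exact: raddf_sum. Qed.
End Lin.



Section Span.
Variables (P Q0 : chain -> Prop).
Lemma span_ind : Q0 0 -> (forall a b, Q0 a -> Q0 b -> Q0 (a + b)) ->
  (forall c a, Q0 a -> Q0 (c *: a)) -> (forall y, P y -> Q0 y) ->
  forall x, in_span P x -> Q0 x.
Proof.
move=> H0 HD HZ HP x [s [Hs ->]]; elim: s Hs => [|p s IH] Hs.
  by rewrite big_nil.
rewrite big_cons; apply: HD; last by apply: IH => q Hq; apply: Hs; rewrite inE Hq orbT.
by apply: HZ; apply: HP; apply: Hs; rewrite inE eqxx.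
Qed.
End Span.

Lemma span0 P : in_span P 0.
Proof. by exists [::]; split => //; rewrite big_nil. Qed.
Lemma spanD P a b : in_span P a -> in_span P b -> in_span P (a + b).
Proof.
move=> [s [Hs ->]] [t [Ht ->]]; exists (s ++ t); split; last by rewrite big_cat.
by move=> p; rewrite mem_cat => /orP [/Hs|/Ht].
Qed.
Lemma spanZ P c a : in_span P a -> in_span P (c *: a).
Proof.
move=> [s [Hs ->]]; exists [seq (c * p.1, p.2) | p <- s]; split.
  by move=> p /mapP [q Hq ->] /=; apply: Hs.
by rewrite big_map scaler_sumr; apply: eq_bigr => p _; rewrite scalerA.
Qed.
Lemma span1 (P : chain -> Prop) y : P y -> in_span P y.
Proof.
by move=> Hy; exists [:: (1, y)]; split; [move=> p; rewrite inE => /eqP -> | rewrite big_seq1 scale1r].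
Qed.

Lemma span_map (P P' : chain -> Prop) (f : chain -> chain) :
  (forall a b, f (a + b) = f a + f b) -> (forall c a, f (c *: a) = c *: f a) ->
  (forall y, P y -> in_span P' (f y)) -> forall x, in_span P x -> in_span P' (f x).
Proof.
move=> fD fZ HP; apply: span_ind => //.
- by rewrite -(scale0r (0 : chain)) fZ scale0r; apply: span0.
- by move=> a b Ha Hb; rewrite fD; apply: spanD.
- by move=> c a Ha; rewrite fZ; apply: spanZ.
Qed.

Section Relabel.
Variable n : nat.
Implicit Types (s : 'S_n) (G : sgraph).

Lemma nth_relabel s G (i : 'I_n) : nth 0%N (legs (relabel s G)) i = nth 0%N (legs G) (s i).
Proof. by rewrite /legs /relabel /= (nth_map i) ?size_enum_ord // nth_ord_enum. Qed.

Lemma size_relabel s G : size (legs (relabel s G)) = n.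
Proof. by rewrite /legs /relabel /= size_map size_enum_ord. Qed.

Lemma relabelK s G : size (legs G) = n -> relabel (s^-1)%g (relabel s G) = G.
Proof.
move=> Hs; case: G Hs => [[[a b] c] d] Hs.
rewrite {1}/relabel; congr (_, _).
apply: (@eq_from_nth _ 0%N); first by rewrite size_map size_enum_ord.
rewrite size_map size_enum_ord => i Hi.
have Hi' : (i < n)%N by [].
rewrite (nth_map (Ordinal Hi')) ?size_enum_ord //.
have -> : nth (Ordinal Hi') (enum 'I_n) i = Ordinal Hi'.
  by apply: val_inj; rewrite /= nth_enum_ord.
by rewrite nth_relabel permKV.
Qed.

Lemma lw_relabel (C : 'I_n -> rat) s G v :
  leg_weight C (relabel s G) v = leg_weight (fun j => C ((s^-1)%g j)) G v.
Proof.
rewrite /leg_weight.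
under eq_bigl => i do rewrite nth_relabel.
rewrite [RHS](reindex_inj (@perm_inj _ s)) /=.
by apply: eq_bigr => i _; rewrite permK.
Qed.

Definition vcond (C : 'I_n -> rat) G := forall v : 'I_(nv G),
  0 < 2 * (nth 0%N (wt G) v)%:R - 2 + (valence G v)%:R + leg_weight C G v.

Lemma stable_change g (C D : 'I_n -> rat) G :
  stable_graph g C G -> vcond D G -> stable_graph g D G.
Proof. by case=> [H1 [H2 H3 _]] H; split. Qed.

Lemma stable_vcond g (C : 'I_n -> rat) G : stable_graph g C G -> vcond C G.
Proof. by case=> [_ [_ _ H]]. Qed.

Lemma stable_size g (C : 'I_n -> rat) G : stable_graph g C G -> size (legs G) = n.
Proof. by case=> [[]]. Qed.

Lemma relabel_stable g (C : 'I_n -> rat) s G :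
  stable_graph g (fun j => C ((s^-1)%g j)) G -> stable_graph g C (relabel s G).
Proof.
case=> [[H1 H2 H3 H4 H5] [H6 H7 H8]]; split; [split|split] => //.
- exact: size_relabel.
- apply/allP => x; rewrite /legs /relabel /= => /mapP [i _ ->]; apply: (allP H5); apply: mem_nth; by rewrite H3.
- by move=> v; rewrite lw_relabel; apply: H8.
Qed.

End Relabel.



Section Iso.
Variable n : nat.
Implicit Types (s : 'S_n) (G : sgraph) (C D : 'I_n -> rat).

Lemma vcondP C G : vcond C G <-> (forall v, (v < nv G)%N ->
  0 < 2 * (nth 0%N (wt G) v)%:R - 2 + (valence G v)%:R + leg_weight C G v).
Proof. by split => H v; [move=> Hv; exact: (H (Ordinal Hv)) | exact: (H v (ltn_ord v))]. Qed.

Lemma iso_relabel s G G' c : size (legs G) = n -> size (legs G') = n ->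
  iso_sign G G' c -> iso_sign (relabel s G) (relabel s G') c.
Proof.
move=> HG HG' [k [m [pi [sg [[E1 E2 E3 E4 E5] [W L Ed Sg]]]]]].
exists k, m, pi, sg; split; split => //.
- by rewrite !size_relabel.
- move=> i v; rewrite size_relabel => Hi.
  move: (nth_relabel s G (Ordinal Hi)) (nth_relabel s G' (Ordinal Hi)) => /= -> ->.
  by apply: L; rewrite HG.
Qed.

Lemma iso_vcond g C D D' G G' c : stable_graph g D G -> stable_graph g D' G' ->
  iso_sign G G' c -> (vcond C G <-> vcond C G').
Proof.
move=> [[_ _ HsG HeG HlG] _] [[_ _ HsG' _ _] _].
move=> [k [m [pi [sg [[E1 E2 E3 E4 E5] [W L Ed Sg]]]]]].
subst k m.
have Hleg : forall (i : 'I_n) (v : 'I_(nv G)),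
    (nth 0%N (legs G') i == pi v) = (nth 0%N (legs G) i == v).
  move=> i v.
  have Hu : (nth 0%N (legs G) i < nv G)%N by apply: (allP HlG); apply: mem_nth; rewrite HsG.
  have := L i (Ordinal Hu); rewrite HsG => /(_ (ltn_ord i) erefl) ->.
  by rewrite -[nth _ _ _ in RHS]/(nat_of_ord (Ordinal Hu)) !(inj_eq val_inj) (inj_eq perm_inj).
have Hlw : forall v : 'I_(nv G), leg_weight C G' (pi v) = leg_weight C G v.
  by move=> v; apply: eq_bigl => i; rewrite Hleg.
have Hval : forall v : 'I_(nv G), valence G' (pi v) = valence G v.
  move=> v; rewrite /valence (big_nth (0,0)%N) E4 big_mkord.
  rewrite [RHS](big_nth (0,0)%N) big_mkord.
  rewrite (reindex_inj (@perm_inj _ sg)) /=.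
  apply: eq_bigr => j _.
  case Ej: (nth (0, 0)%N (edges G) j) => [a b].
  have : ((a < nv G) && (b < nv G))%N.
    by rewrite -[a]/((a,b).1) -[b]/((a,b).2) -Ej; apply: (allP HeG); apply: mem_nth.
  case/andP => Ha Hb.
  have := Ed j (Ordinal Ha) (Ordinal Hb) Ej.
  have Hx : forall x : 'I_(nv G), (val (pi x) == val (pi v)) = (val x == val v).
    by move=> x; rewrite !(inj_eq val_inj) (inj_eq perm_inj).
  by case=> ->; rewrite /= !Hx // addnC.
split => /vcondP H; apply/vcondP => v Hv.
- rewrite E2 in Hv.
  have Hu : pi (pi^-1 (Ordinal Hv))%g = Ordinal Hv by rewrite permKV.
  have := H _ (ltn_ord (pi^-1 (Ordinal Hv))%g).
  by rewrite -W -Hval -Hlw Hu.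
- by have := H _ (eq_ind_r (fun x => (pi (Ordinal Hv) < x)%N) (ltn_ord _) E2);
     rewrite W Hval Hlw.
Qed.
End Iso.



Section Mono.
Variable n : nat.
Implicit Types (G : sgraph) (A B C : 'I_n -> rat) (X : {set 'I_n}).

Lemma wsum_ge0 C X : (forall i, 0 < C i) -> 0 <= wsum C X.
Proof. by move=> H; apply: sumr_ge0 => i _; apply: ltW. Qed.

Lemma wsum_pos A B X : (forall i, 0 < B i) -> 0 < wsum A X -> 0 < wsum B X.
Proof.
move=> HB; have [->|[i Hi]] := set_0Vmem X.
  by rewrite /wsum big_set0 ltxx.
move=> _; rewrite /wsum (bigD1 i) //=.
have := HB i; have : 0 <= \sum_(j in X | j != i) B j by apply: sumr_ge0 => j _; apply: ltW.
lra.
Qed.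

Lemma wsum_le1 C X : (forall i, 0 < C i <= 1) -> (#|X| <= 1)%N -> wsum C X <= 1.
Proof.
move=> HC; rewrite leq_eqVlt ltnS leqn0 => /orP [/cards1P [x ->]|/eqP /cards0_eq ->].
  by rewrite /wsum big_set1; case/andP: (HC x).
by rewrite /wsum big_set0.
Qed.

Lemma wsum_split C X : \sum_(i < n) C i = wsum C X + wsum C (~: X).
Proof.
rewrite /wsum (bigID (fun i => i \in X)) /=; congr (_ + _).
by apply: eq_bigl => i; rewrite inE.
Qed.

Lemma wsum_gt1 g A B X : weight_datum g A -> weight_datum g B ->
  (forall X, wall_index g X -> 1 < wsum A X -> 1 < wsum B X) ->
  1 < wsum A X -> 1 < wsum B X.
Proof.
move=> [HA HAs] [HB HBs] Hw H.
have H2 : (2 <= #|X|)%N.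
  rewrite ltnNge; apply/negP => /(wsum_le1 HA); lra.
case: g HAs HBs Hw => [|g'] HAs HBs Hw.
- case: (leqP #|X| (n - 2)) => Hc; first by apply: Hw => //; rewrite /wall_index H2 Hc.
  have Hc' : (#|~: X| <= 1)%N by rewrite cardsCs setCK card_ord; lia.
  have := wsum_le1 HB Hc'.
  have := wsum_split B X.
  rewrite mulr0 in HBs. lra.
- apply: Hw => //; rewrite /wall_index.
  by rewrite H2 /=; have := max_card X; rewrite card_ord.
Qed.
End Mono.



Lemma val_pos G e v : e \in edges G -> (e.1 == v) || (e.2 == v) -> (0 < valence G v)%N.
Proof.
move=> He Hv; rewrite /valence (big_rem e He) /=.
by case/orP: Hv => /eqP ->; rewrite eqxx /=; lia.
Qed.

Lemma isolated G v : (0 < nv G)%N -> (v < nv G)%N -> connected G -> valence G v = 0%N ->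
   all (fun e => (e.1 < nv G) && (e.2 < nv G))%N (edges G) ->
   nv G = 1%N /\ edges G = [::].
Proof.
move=> H0 Hv Hc Hval He.
have Hnv : nv G = 1%N.
  apply/eqP; rewrite eqn_leq H0 andbT leqNgt; apply/negP => H2.
  have Hu : ((if v == 0%N then 1 else 0) < nv G)%N by case: (v == 0%N); lia.
  have := Hc (Ordinal Hv) (Ordinal Hu).
  case/connectP => p Hp Hl.
  case: p Hp Hl => [|y p] /=.
    by move=> _ /(congr1 val) /=; case: (v =P 0%N) => [->|] //; move=> Hne E; apply: Hne.
  case/andP => Hadj _ _.
  move: Hadj; rewrite /adj /= => /orP [Hin|Hin].
  - have : (0 < valence G v)%N by apply: (val_pos Hin); rewrite /= eqxx.
    by rewrite Hval.
  - have : (0 < valence G v)%N by apply: (val_pos Hin); rewrite /= eqxx orbT.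
    by rewrite Hval.
split => //.
case E: (edges G) He => [//|[a b] s] /= /andP [/andP [H1 _] _].
have : (0 < valence G v)%N.
  apply: (@val_pos G (a, b)); first by rewrite E inE eqxx.
  by apply/orP; left; apply/eqP; move: H1 Hv; rewrite Hnv /=; lia.
by rewrite Hval.
Qed.

Lemma stable_mono g n (A B : 'I_n -> rat) G : weight_datum g A -> weight_datum g B ->
  (forall X, wall_index g X -> 1 < wsum A X -> 1 < wsum B X) ->
  stable_graph g A G -> stable_graph g B G.
Proof.
move=> WA WB Hw HG; apply: (stable_change HG); apply/vcondP => v Hv.
have := stable_vcond HG; move/vcondP => /(_ v Hv).
set X := [set i : 'I_n | nth 0%N (legs G) i == v].
have LW : forall C, leg_weight C G v = wsum C X.
  by move=> C; rewrite /wsum /leg_weight; apply: eq_bigl => i; rewrite inE.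
rewrite !LW.
have [HA HAs] := WA; have [HB HBs] := WB.
have HBpos : forall i, 0 < B i by move=> i; case/andP: (HB i).
have HApos : forall i, 0 < A i by move=> i; case/andP: (HA i).
set w := nth 0%N (wt G) v; set d := valence G v.
case: (boolP ((1 <= w)%N || (2 <= d)%N)) => Hwd.
- have Hf : 0 <= 2 * w%:R - 2 + d%:R :> rat.
    have H0w : 0 <= w%:R :> rat by [].
    have H0d : 0 <= d%:R :> rat by [].
    case/orP: Hwd => H.
    + have : 1 <= w%:R :> rat by rewrite ler1n.
      lra.
    + have : 2 <= d%:R :> rat by rewrite ler_nat.
      lra.
  case: (ltrP 0 (wsum A X)) => HAp.
  + have := wsum_pos HBpos HAp; lra.
  + have := wsum_ge0 X HBpos; lra.
- have Hw0 : w = 0%N by move: Hwd; lia.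
  have : (d == 0)%N || (d == 1)%N by move: Hwd; lia.
  rewrite Hw0; case/orP => /eqP Hd; rewrite Hd.
  + have [[H0 Hsw Hsl He Hl] [Hc Hg _]] := HG.
    have [Hnv HE] := isolated H0 Hv Hc Hd He.
    have Hg0 : g = 0%N.
      rewrite -Hg /betti1 HE Hnv /=.
      move: Hsw Hw0; rewrite Hnv /w.
      have -> : v = 0%N by move: Hv; rewrite Hnv; lia.
      by case: (wt G) => [|x [|y s]] //= _ ->.
    have HX : X = setT.
      apply/setP => i; rewrite !inE.
      have : (nth 0%N (legs G) i < nv G)%N by apply: (allP Hl); apply: mem_nth; rewrite Hsl.
      by move: Hv; rewrite Hnv => Hv Hi; apply/eqP; lia.
    have := wsum_split B X; rewrite HX setCT /wsum big_set0 addr0 => <-.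
    move: HBs; rewrite Hg0 mulr0; lra.
  + move=> H.
    have H1' : 1 < wsum A X by move: H; rewrite mulr0; lra.
    have := wsum_gt1 WA WB Hw H1'; lra.
Qed.



Lemma stable_ext g n (C D : 'I_n -> rat) G : (forall i, C i = D i) ->
  stable_graph g C G -> stable_graph g D G.
Proof.
move=> E HG; apply: (stable_change HG) => v; have := stable_vcond HG v.
by rewrite /leg_weight; under eq_bigr => i _ do rewrite E.
Qed.

Lemma contract_relabel n (s : 'S_n) G j : size (legs G) = n ->
  contract (relabel s G) j = relabel s (contract G j).
Proof.
move=> Hs; rewrite /contract /relabel /=; congr (_, _).
rewrite -map_comp; apply: eq_map => i /=.
by rewrite (nth_map 0%N) // Hs.
Qed.

Lemma dgen_relabel n (s : 'S_n) G : size (legs G) = n ->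
  dgen (relabel s G) = relabel_map s (dgen G).
Proof.
move=> Hs; rewrite /dgen /relabel_map fglift_sum.
apply: eq_bigr => j _; by rewrite fgliftZ fglift_gen contract_relabel.
Qed.

Theorem mainTheorem8 (g n N : nat) (A : 'I_n -> rat) (As : nat -> 'I_n -> rat) :
  (1 <= n)%N -> (1 <= N)%N ->
  weight_datum g A -> As N = A ->
  (forall p, (1 <= p <= N)%N -> weight_datum g (As p) /\ in_chamber g (As p)) ->
  (forall p, (2 <= p <= N)%N -> orbit_le g (As p.-1) (As p)) ->
  forall p, (2 <= p <= N)%N ->
    exists s : 'S_n, induced_injective_chain_map g (As p.-1) (As p) s.
Proof.
move=> Hn HN HA HAN Hwd Hle p Hp.
have [WA' _] := Hwd p.-1 (ltac:(lia)).
have [WB _] := Hwd p (ltac:(lia)).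
have [s [t Hch]] := Hle p Hp.
move: WA' WB Hch; set A' := As p.-1; set B := As p => WA' WB Hch.
set sg := (t^-1 * s)%g.
exists sg.
set B' := fun j => B ((sg^-1)%g j).
have WB' : weight_datum g B'.
  case: WB => HB HBs; split; first by move=> i; apply: HB.
  by have -> : \sum_(i < n) B' i = \sum_(i < n) B i by rewrite [RHS](reindex_inj (@perm_inj _ (sg^-1)%g)).
have Hwall : forall X, wall_index g X -> 1 < wsum A' X -> 1 < wsum B' X.
  move=> X HX H.
  have cS : #|(s^-1)%g @: X| = #|X| by apply: card_imset; apply: perm_inj.
  have := Hch ((s^-1)%g @: X).
  rewrite /wall_index cS -/(wall_index g X) HX => /(_ isT).
  rewrite /wsum /permute_wd !big_imset /=; try by move=> x y _ _; apply: perm_inj.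
  have E1 : \sum_(i in X) A' (s ((s^-1)%g i)) = \sum_(i in X) A' i.
    by apply: eq_bigr => i _; rewrite permKV.
  have E2 : \sum_(i in X) B (t ((s^-1)%g i)) = \sum_(i in X) B' i.
    by apply: eq_bigr => i _; rewrite /B' /sg invMg invgK permM.
  by rewrite E1 E2; apply.
have HP1 : forall G, stable_graph g A' G -> stable_graph g B (relabel sg G).
  move=> G HG; apply: relabel_stable; exact: (stable_mono WA' WB' Hwall HG).
split.
- exact: HP1.
- apply: span_map; [exact: fgliftD | exact: fgliftZ |].
  move=> y [G [G' [c [HG HG' Hiso ->]]]].
  rewrite /relabel_map fgliftB fgliftZ !fglift_gen; apply: span1.
  exists (relabel sg G), (relabel sg G'), c; split => //; try exact: HP1.
  exact: iso_relabel (stable_size HG) (stable_size HG') Hiso.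
- apply: (span_map (f := fun x => relabel_map sg (diff x) - diff (relabel_map sg x))).
  + by move=> a b; rewrite /diff /relabel_map !fgliftD opprD addrACA.
  + by move=> c a; rewrite /diff /relabel_map !fgliftZ scalerBr.
  + move=> y [G [HG ->]].
    rewrite /relabel_map /diff !fglift_gen dgen_relabel ?(stable_size HG) // subrr.
    exact: span0.
- move=> x Hx Hr.
  set Q := fglift (fun H => if excluded_middle_informative
                  (stable_graph g A' (relabel (sg^-1)%g H))
                  then gen (relabel (sg^-1)%g H) else 0).
  have HQ : Q (relabel_map sg x) = x.
    refine (span_ind (Q0 := fun z => Q (relabel_map sg z) = z) _ _ _ _ Hx).
    + by rewrite /Q /relabel_map !fglift0.
    + by move=> a b Ha Hb; rewrite /Q /relabel_map !fgliftD -/Q -/(relabel_map sg a) Ha Hb.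
    + by move=> c a Ha; rewrite /Q /relabel_map !fgliftZ -/Q -/(relabel_map sg a) Ha.
    + move=> y [G [HG ->]]; rewrite /Q /relabel_map !fglift_gen.
      rewrite relabelK ?(stable_size HG) //.
      by destruct (excluded_middle_informative _) as [s0|Hn'].
  rewrite -HQ.
  refine (span_ind (Q0 := fun z => cx_rel g A' (Q z)) _ _ _ _ Hr).
  + rewrite /Q fglift0; exact: span0.
  + by move=> a b Ha Hb; rewrite /Q fgliftD; apply: spanD.
  + by move=> c a Ha; rewrite /Q fgliftZ; apply: spanZ.
  + move=> y [H [H' [c [HH HH' Hiso ->]]]].
    rewrite /Q fgliftB fgliftZ !fglift_gen.
    have HisoK := iso_relabel (sg^-1)%g (stable_size HH) (stable_size HH') Hiso.
    have E : forall j, B ((sg^-1)%g (((sg^-1)^-1)%g j)) = B j by move=> j; rewrite permKV.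
    have HK := relabel_stable (C := fun i => B ((sg^-1)%g i)) (s := (sg^-1)%g) (stable_ext (fun j => esym (E j)) HH).
    have HK' := relabel_stable (C := fun i => B ((sg^-1)%g i)) (s := (sg^-1)%g) (stable_ext (fun j => esym (E j)) HH').
    have Hiff := iso_vcond A' HK HK' HisoK.
    destruct (excluded_middle_informative (stable_graph g A' (relabel (sg^-1)%g H))) as [s1|n1];
      destruct (excluded_middle_informative (stable_graph g A' (relabel (sg^-1)%g H'))) as [s2|n2].
    * apply: span1; do 3 eexists; split; [exact: s1 | exact: s2 | exact: HisoK | by []].
    * by exfalso; apply: n2; apply: (stable_change HK'); apply/Hiff; apply: stable_vcond s1.
    * by exfalso; apply: n1; apply: (stable_change HK); apply/Hiff; apply: stable_vcond s2.
    * rewrite scaler0 subr0; exact: span0.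
Qed.
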